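(* Let $\theta\in[0,1)$ and $\alpha_1,\dots,\alpha_T>0$, $\beta_1,\dots,\beta_T>0$ with $\sum_t\alpha_t=\sum_t\beta_t=1$, and let $\gamma_t=\beta_t/\alpha_t$. For $\eta_1\ge0$ define $$\Upsilon_{\mathrm{market}}(\eta_1)=1+\theta^2\Big(\sum_{t=1}^T\frac{\beta_t^2}{\alpha_t}-1\Big)+\eta_1\sum_{t=1}^T\frac{\alpha_t(1-\theta(1-\gamma_t))^2(1-\gamma_t)}{1+\eta_1\gamma_t}.$$ Then $\Upsilon_{\mathrm{market}}$ is decreasing on $[0,\frac{\theta}{1-\theta}]$ and increasing on $[\frac{\theta}{1-\theta},\infty)$, and $$\Upsilon_{\mathrm{market}}(0)=1+\theta^2\Big(\sum_t\frac{\beta_t^2}{\alpha_t}-1\Big),\quad \Upsilon_{\mathrm{market}}\Big(\frac{\theta}{1-\theta}\Big)=1,\quad \lim_{\eta_1\to\infty}\Upsilon_{\mathrm{market}}(\eta_1)=1+(1-\theta)^2\Big(\sum_{t=1}^T\frac{\alpha_t^2}{\beta_t}-1\Big).$$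
   Context: $\Upsilon_{\mathrm{market}}(\eta_1)$ is the ratio of the expected cost of the separable schedule $(\alpha_t(1-\theta)+\beta_t\theta)\mathbf{x}_0$ to the optimal expected cost when the liquidated portfolio $\mathbf{x}_0$ equals the index portfolio $\mathbf{w}_1$, with $\eta_1=\bar\psi_{\mathrm{f},1}\mathbf{w}_1^\top\bar{\boldsymbol{\Psi}}_{\mathrm{id}}^{-1}\mathbf{w}_1$ the ratio of index-fund to single-stock liquidity along $\mathbf{w}_1$. *)

(* Defs.v *)
From HB Require Import structures.
From mathcomp Require Import all_boot all_order all_algebra.
From mathcomp Require Import all_classical all_reals all_analysis.
Set Implicit Arguments. Unset Strict Implicit. Unset Printing Implicit Defensive.
Import Order.TTheory GRing.Theory Num.Theory.
Local Open Scope ring_scope.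

Definition gam (R : realType) (T : nat) (alpha beta : 'I_T -> R) (t : 'I_T) : R :=
  beta t / alpha t.

Definition Upsilon_market (R : realType) (T : nat) (theta : R)
  (alpha beta : 'I_T -> R) (eta1 : R) : R :=
  1 + theta ^+ 2 * (\sum_(t < T) beta t ^+ 2 / alpha t - 1)
  + eta1 * \sum_(t < T)
      (alpha t * (1 - theta * (1 - gam alpha beta t)) ^+ 2 * (1 - gam alpha beta t))
        / (1 + eta1 * gam alpha beta t).

(* Main.v *)
Require Import Defs.
From HB Require Import structures.
From mathcomp Require Import all_boot all_order all_algebra.
From mathcomp Require Import all_classical all_reals all_analysis.
From mathcomp Require Import ring lra.
Import Order.TTheory GRing.Theory Num.Theory.
Import numFieldNormedType.Exports.
Local Open Scope classical_set_scope.
Local Open Scope ring_scope.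
Section S.
Variable R : realType.

Lemma key_id (th a g x y : R) : th < 1 -> 0 < g -> 0 <= x -> 0 <= y ->
  let c := th / (1 - th) in
  y * (a * (1 - th * (1 - g)) ^+ 2 * (1 - g) / (1 + y * g))
  - x * (a * (1 - th * (1 - g)) ^+ 2 * (1 - g) / (1 + x * g))
  - (y - x) * (1 - th) ^+ 2 * (1 + c) ^+ 2 / ((1 + x) * (1 + y)) * (a - a * g)
  = a * (y - x) * (1 - th) ^+ 2 * (1 - g) ^+ 2 *
    ((y - c) * ((1 + c * g) * (1 + x)) + (x - c) * ((1 + c) * (1 + y * g)))
    / ((1 + x * g) * (1 + y * g) * (1 + x) * (1 + y)).
Proof.
move=> th1 g0 x0 y0 c; rewrite /c.
have h1 : 1 - th != 0 by rewrite subr_eq0 gt_eqF.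
have h2 : 1 + x * g != 0 by rewrite gt_eqF // ltr_pwDl // mulr_ge0 // ltW.
have h3 : 1 + y * g != 0 by rewrite gt_eqF // ltr_pwDl // mulr_ge0 // ltW.
have h4 : 1 + x != 0 by rewrite gt_eqF // ltr_pwDl.
have h5 : 1 + y != 0 by rewrite gt_eqF // ltr_pwDl.
field; rewrite ?h1 ?h2 ?h3 ?h4 ?h5 //.
Qed.
End S.
Lemma cvg_bigsum (R : realType) (I : Type) (r : seq I) (f : I -> R -> R) (l : I -> R) :
  (forall i, f i x @[x --> +oo] --> l i) ->
  \sum_(i <- r) f i x @[x --> +oo] --> \sum_(i <- r) l i.
Proof.
move=> fl; elim: r => [|i r IH].
  rewrite big_nil; under eq_fun do rewrite big_nil; exact: cvg_cst.
rewrite big_cons; under eq_fun do rewrite big_cons.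
exact: cvgD.
Qed.

Lemma inv_term (R : realType) (s g : R) : 0 < g ->
  s / (x^-1 + g) @[x --> +oo] --> s / g.
Proof.
move=> g0.
have h0 : (fun x : R => x^-1) @ +oo --> 0.
  have := (@gtr0_cvgV0 R R (pinfty_nbhs R) _ id).
  move=> H; apply/H; last exact: cvg_id.
  by near=> x.
apply: cvgM; first exact: cvg_cst.
apply: cvgV; first by rewrite gt_eqF.
by rewrite -[X in _ --> X]add0r; apply: cvgD => //; exact: cvg_cst.
Unshelve. all: by end_near.
Qed.

Theorem mainTheorem9 (R : realType) (T : nat) (theta : R) (alpha beta : 'I_T -> R)
  (htheta0 : 0 <= theta) (htheta1 : theta < 1)
  (halpha : forall t, 0 < alpha t) (hbeta : forall t, 0 < beta t)
  (hsa : \sum_(t < T) alpha t = 1) (hsb : \sum_(t < T) beta t = 1) :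
  let U := Upsilon_market theta alpha beta in
  let c := theta / (1 - theta) in
  (forall x y : R, 0 <= x -> x <= y -> y <= c -> U y <= U x) /\
  (forall x y : R, c <= x -> x <= y -> U x <= U y) /\
  U 0 = 1 + theta ^+ 2 * (\sum_(t < T) beta t ^+ 2 / alpha t - 1) /\
  U c = 1 /\
  U x @[x --> +oo] --> 1 + (1 - theta) ^+ 2 * (\sum_(t < T) alpha t ^+ 2 / beta t - 1).
Proof.
move=> U c.
have g0 t : 0 < gam alpha beta t by rewrite /gam divr_gt0.
have c0 : 0 <= c by rewrite /c divr_ge0 // subr_ge0 ltW.
have h1 : 1 - theta != 0 by rewrite subr_eq0 gt_eqF.
pose K x y := (y - x) * (1 - theta) ^+ 2 * (1 + c) ^+ 2 / ((1 + x) * (1 + y)).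
pose E x y (t : 'I_T) := let a := alpha t in let g := gam alpha beta t in
    a * (y - x) * (1 - theta) ^+ 2 * (1 - g) ^+ 2 *
    ((y - c) * ((1 + c * g) * (1 + x)) + (x - c) * ((1 + c) * (1 + y * g)))
    / ((1 + x * g) * (1 + y * g) * (1 + x) * (1 + y)).
have sab : \sum_(t < T) (alpha t - alpha t * gam alpha beta t) = 0.
  apply/eqP; rewrite sumrB hsa -hsb subr_eq0 eq_sym; apply/eqP/eq_bigr => t _.
  by rewrite /gam mulrC divfK // gt_eqF.
have diff x y : 0 <= x -> 0 <= y -> U y - U x = \sum_(t < T) E x y t.
  move=> x0 y0.
  have -> : U y - U x = \sum_(t < T) (y * (alpha t * (1 - theta * (1 - gam alpha beta t)) ^+ 2 * (1 - gam alpha beta t) / (1 + y * gam alpha beta t))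
       - x * (alpha t * (1 - theta * (1 - gam alpha beta t)) ^+ 2 * (1 - gam alpha beta t) / (1 + x * gam alpha beta t))).
    rewrite sumrB -!mulr_sumr /U /Upsilon_market; ring.
  have -> : forall F : _ -> R, \sum_(t < T) F t = \sum_(t < T) (F t - K x y * (alpha t - alpha t * gam alpha beta t)).
    by move=> F; rewrite sumrB -mulr_sumr sab mulr0 subr0.
  apply: eq_bigr => t _; exact: key_id.
have den : forall x y t, 0 <= x -> 0 <= y -> 0 <= ((1 + x * gam alpha beta t) * (1 + y * gam alpha beta t) * (1 + x) * (1 + y))^-1.
  move=> x y t x0 y0; have gt := ltW (g0 t).
  by rewrite invr_ge0 !mulr_ge0 // addr_ge0 // mulr_ge0.
have M : forall x y t, x <= y -> 0 <= alpha t * (y - x) * (1 - theta) ^+ 2 * (1 - gam alpha beta t) ^+ 2.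
  move=> x y t xy; rewrite mulr_ge0 ?sqr_ge0 // mulr_ge0 ?sqr_ge0 // mulr_ge0 ?subr_ge0 // ltW // halpha.

split.
  move=> x y x0 xy yc; have y0 := le_trans x0 xy.
  rewrite -subr_le0 (diff x y x0 y0).
  apply: sumr_le0 => t _; rewrite /E /=.
  apply: mulr_le0_ge0; last exact: den.
  apply: mulr_ge0_le0; first exact: M.
  have gt := ltW (g0 t).
  have A : 0 <= (1 + c * gam alpha beta t) * (1 + x).
    by rewrite mulr_ge0 // addr_ge0 // mulr_ge0.
  have Q : 0 <= (1 + c) * (1 + y * gam alpha beta t).
    by rewrite mulr_ge0 // addr_ge0 // mulr_ge0.
  have P1 : (y - c) * ((1 + c * gam alpha beta t) * (1 + x)) <= 0.
    by apply: mulr_le0_ge0 => //; rewrite subr_le0.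
  have P2 : (x - c) * ((1 + c) * (1 + y * gam alpha beta t)) <= 0.
    by apply: mulr_le0_ge0 => //; rewrite subr_le0 (le_trans xy).
  by rewrite -(addr0 0) lerD.
split.
  move=> x y cx xy; have x0 : 0 <= x by exact: le_trans cx.
  have y0 : 0 <= y by exact: le_trans xy.
  rewrite -subr_ge0 (diff x y x0 y0).
  apply: sumr_ge0 => t _; rewrite /E /=.
  apply: mulr_ge0; last exact: den.
  apply: mulr_ge0; first exact: M.
  have gt := ltW (g0 t).
  have A : 0 <= (1 + c * gam alpha beta t) * (1 + x).
    by rewrite mulr_ge0 // addr_ge0 // mulr_ge0.
  have Q : 0 <= (1 + c) * (1 + y * gam alpha beta t).
    by rewrite mulr_ge0 // addr_ge0 // mulr_ge0.
  apply: addr_ge0; apply: mulr_ge0 => //; rewrite subr_ge0 //.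
  exact: le_trans xy.
split.
  by rewrite /U /Upsilon_market mul0r addr0.
split.
  rewrite /U /Upsilon_market mulr_sumr.
  have -> : \sum_(t < T) c * (alpha t * (1 - theta * (1 - gam alpha beta t)) ^+ 2 * (1 - gam alpha beta t) / (1 + c * gam alpha beta t))
    = \sum_(t < T) (c * (1 - theta) ^+ 2 * alpha t + c * (1 - theta) ^+ 2 * (c - 1) * beta t - c ^+ 2 * (1 - theta) ^+ 2 * (beta t ^+ 2 / alpha t)).
    apply: eq_bigr => t _.
    have a0 : alpha t != 0 by rewrite gt_eqF.
    have d0 : 1 + c * gam alpha beta t != 0.
      by rewrite gt_eqF // ltr_pwDl // mulr_ge0 // ltW.
    move: d0; rewrite /c /gam => d0; field.
    have p1 : 0 < (1 - theta) * alpha t by rewrite mulr_gt0 // subr_gt0.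
    have p2 : 0 <= theta * beta t by rewrite mulr_ge0 // ltW.
    rewrite gt_eqF //; lra.
  rewrite sumrB big_split /= -!mulr_sumr hsa hsb /c; field; exact: h1.
pose s t := alpha t * (1 - theta * (1 - gam alpha beta t)) ^+ 2 * (1 - gam alpha beta t).
have lim : U x @[x --> +oo] --> 1 + theta ^+ 2 * (\sum_(t < T) beta t ^+ 2 / alpha t - 1)
    + \sum_(t < T) s t / gam alpha beta t.
  apply: (@cvg_trans _ ((fun x => 1 + theta ^+ 2 * (\sum_(t < T) beta t ^+ 2 / alpha t - 1)
    + \sum_(t < T) s t / (x^-1 + gam alpha beta t)) @ +oo)).
    apply: near_eq_cvg; near=> x.
    have x0 : 0 < x by near: x; exact: nbhs_pinfty_gt.
    rewrite /U /Upsilon_market mulr_sumr; congr (_ + _); apply: eq_bigr => t _.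
    rewrite /s; have := g0 t; move: (gam alpha beta t) => g g0'.
    have xg : 0 < x * g by rewrite mulr_gt0.
    have d : 1 + x * g != 0 by rewrite gt_eqF //; lra.
    have d' : x^-1 + g != 0 by rewrite gt_eqF // addr_gt0 // invr_gt0.
    field; by rewrite d gt_eqF.
  apply: cvgD; first exact: cvg_cst.
  by apply: cvg_bigsum => t; apply: inv_term.
suff <- : 1 + theta ^+ 2 * (\sum_(t < T) beta t ^+ 2 / alpha t - 1) + \sum_(t < T) s t / gam alpha beta t = 1 + (1 - theta) ^+ 2 * (\sum_(t < T) alpha t ^+ 2 / beta t - 1) by [].
have -> : \sum_(t < T) s t / gam alpha beta t = \sum_(t < T)
   ((1 - theta) ^+ 2 * (alpha t ^+ 2 / beta t) - (1 - theta) ^+ 2 * alpha t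
    + 2 * theta * (1 - theta) * (alpha t - beta t) + theta ^+ 2 * beta t - theta ^+ 2 * (beta t ^+ 2 / alpha t)).
  apply: eq_bigr => t _; rewrite /s /gam.
  have a0 : alpha t != 0 by rewrite gt_eqF.
  have b0 : beta t != 0 by rewrite gt_eqF.
  field; by rewrite a0 b0.
rewrite !big_split /= !sumrN -!mulr_sumr sumrB hsa hsb; ring.
Unshelve. all: by end_near.
Qed.
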